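(* For every 3-uniform hypergraph $\mathcal{H}$ there exists a graph $G$ in which every edge is contained in a triangle such that the domination game on $\mathcal{H}$ is equivalent to the domination game on $G$; and conversely, for every graph $G$ in which every edge is contained in a triangle there exists a 3-uniform hypergraph $\mathcal{H}$ such that the domination game on $\mathcal{H}$ is equivalent to the domination game on $G$.
   Context: Hypergraphs and graphs are finite. Two distinct vertices are adjacent if some edge contains both; $N[v]$ is $v$ together with its adjacent vertices, $N[S]=\bigcup_{v\in S}N[v]$. In the domination game, two players alternately choose vertices $v_1,v_2,\dots$; with $D_i=\{v_1,\dots,v_i\}$, a sequence $v_1,\dots,v_d$ is a legal game if $N[v_i]\setminus N[D_{i-1}]\ne\emptyset$ for all $2\le i\le d$ and $N[D_d]$ is the whole vertex set. Two domination games, on $\mathcal{H}_1$ and $\mathcal{H}_2$, are equivalent if $V(\mathcal{H}_1)=V(\mathcal{H}_2)$ and every sequence $v_1,\dots,v_d$ is a legal game on $\mathcal{H}_1$ iff it is a legal game on $\mathcal{H}_2$. *)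

(* Defs.v *)
From mathcomp Require Import all_boot.
Set Implicit Arguments. Unset Strict Implicit. Unset Printing Implicit Defensive.

(* A (hyper)graph on the finite vertex set V (= the whole finType) is given
   by its set of edges E : {set {set V}}. *)
Section Dom.
Variable V : finType.
Implicit Types (E : {set {set V}}) (u v : V) (s : seq V).

Definition adj E u v : bool :=
  (u != v) && [exists e in E, (u \in e) && (v \in e)].

Definition cnbhd E v : {set V} := [set u | (u == v) || adj E v u].

Definition cnbhdS E s : {set V} := \bigcup_(v <- s) cnbhd E v.

Definition legal_game E s : Prop :=
  (forall p v q, s = p ++ v :: q -> p != [::] ->
     ~~ (cnbhd E v \subset cnbhdS E p)) /\
  cnbhdS E s = [set: V].

Definition equiv_games E1 E2 : Prop :=
  forall s, legal_game E1 s <-> legal_game E2 s.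

Definition three_uniform E : Prop := forall e, e \in E -> #|e| = 3.

Definition is_graph E : Prop := forall e, e \in E -> #|e| = 2.

Definition edges_in_triangles E : Prop :=
  forall u v, [set u; v] \in E ->
    exists w, [set u; w] \in E /\ [set v; w] \in E /\ w != u /\ w != v.
End Dom.

(* Main.v *)
Require Import Defs.
From mathcomp Require Import all_boot.
Set Implicit Arguments. Unset Strict Implicit. Unset Printing Implicit Defensive.

Lemma adj_equiv (V : finType) (E1 E2 : {set {set V}}) :
  (forall u v, adj E1 u v = adj E2 u v) -> equiv_games E1 E2.
Proof.
move=> h.
have hc : forall v, cnbhd E1 v = cnbhd E2 v.
  by move=> v; apply/setP=> x; rewrite !inE h.
have hs : forall s, cnbhdS E1 s = cnbhdS E2 s.
  by move=> s; rewrite /cnbhdS; apply: eq_bigr => v _; rewrite hc.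
move=> s; rewrite /legal_game hs; split=> [[A B]|[A B]]; split=> //.
  by move=> p v q hq hp; rewrite -hc -hs; apply: A hq hp.
by move=> p v q hq hp; rewrite hc hs; apply: A hq hp.
Qed.

Lemma pair_eq (V : finType) (e : {set V}) u v :
  #|e| = 2 -> u != v -> u \in e -> v \in e -> e = [set u; v].
Proof.
move=> he uv ue ve; apply/esym/eqP; rewrite eqEcard cards2 uv he /= andbT.
by apply/subsetP=> x; rewrite !inE => /orP[]/eqP->.
Qed.

Theorem proposition3 (V : finType) :
  (forall H : {set {set V}}, three_uniform H ->
     exists G : {set {set V}},
       is_graph G /\ edges_in_triangles G /\ equiv_games H G) /\
  (forall G : {set {set V}}, is_graph G -> edges_in_triangles G ->
     exists H : {set {set V}}, three_uniform H /\ equiv_games H G).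
Proof.
split.
- move=> H hH.
  exists [set e : {set V} | (#|e| == 2) && [exists f in H, e \subset f]].
  split; [|split].
  + by move=> e; rewrite inE => /andP[/eqP].
  + move=> u v; rewrite inE cards2 => /andP[huv /exists_inP[f fH sf]].
    have uv : u != v by case: (u != v) huv.
    have hf := hH f fH.
    have : 0 < #|f :\: [set u; v]|.
      by rewrite cardsD (setIidPr sf) cards2 uv hf.
    case/card_gt0P=> w; rewrite !inE negb_or => /andP[/andP[wu wv] wf].
    have uf : u \in f by apply: (subsetP sf); rewrite !inE eqxx.
    have vf : v \in f by apply: (subsetP sf); rewrite !inE eqxx orbT.
    exists w; split; [|split; [|split]] => //.
    * rewrite inE cards2 [u == w]eq_sym wu /=; apply/exists_inP; exists f => //.
      by apply/subsetP=> x; rewrite !inE => /orP[]/eqP->.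
    * rewrite inE cards2 [v == w]eq_sym wv /=; apply/exists_inP; exists f => //.
      by apply/subsetP=> x; rewrite !inE => /orP[]/eqP->.
  + apply: adj_equiv => u v; rewrite /adj; case uv: (u != v) => //=.
    apply/idP/idP.
    * case/exists_inP=> f fH /andP[uf vf]; apply/exists_inP; exists [set u; v].
        rewrite inE cards2 uv /=; apply/exists_inP; exists f => //.
        by apply/subsetP=> x; rewrite !inE => /orP[]/eqP->.
      by rewrite !inE !eqxx orbT.
    * case/exists_inP=> e; rewrite inE => /andP[_ /exists_inP[f fH sf]] /andP[ue ve].
      by apply/exists_inP; exists f => //; rewrite (subsetP sf) ?(subsetP sf v).
- move=> G hG hT.
  exists [set e : {set V} | (#|e| == 3) &&
     [forall x in e, forall y in e, (x != y) ==> ([set x; y] \in G)]].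
  split.
  + by move=> e; rewrite inE => /andP[/eqP].
  + apply: adj_equiv => u v; rewrite /adj; case uv: (u != v) => //=.
    apply/idP/idP.
    * case/exists_inP=> t; rewrite inE => /andP[_ /forall_inP ht] /andP[ut vt].
      apply/exists_inP; exists [set u; v]; last by rewrite !inE !eqxx orbT.
      by move: (ht u ut) => /forall_inP /(_ v vt); rewrite uv.
    * case/exists_inP=> e eG /andP[ue ve].
      have ee := pair_eq (hG e eG) uv ue ve.
      rewrite ee in eG.
      case: (hT u v eG) => w [uw [vw [wu wv]]].
      apply/exists_inP; exists [set u; v; w]; last by rewrite !inE !eqxx ?orbT.
      rewrite inE; apply/andP; split.
        by rewrite setUC cardsU1 cards2 uv !inE negb_or wu wv.
      have sym : forall a b : V, [set a; b] = [set b; a] by move=> a b; rewrite setUC.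
      apply/forall_inP=> x; rewrite !inE => hx; apply/forall_inP=> y; rewrite !inE => hy.
      case/orP: hx => [/orP[]|] /eqP ->; case/orP: hy => [/orP[]|] /eqP ->;
        rewrite ?eqxx // ?(sym v u) ?(sym w u) ?(sym w v) ?uw ?vw ?eG ?implybT //.
Qed.
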